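(* Let $\mathbb L$ be a tropical Lagrangian multi-section over a complete fan $\Sigma$, let $\tau\in\Sigma$ with a chosen splitting $\iota_\tau$, and let $\tau'$ be a lift of $\tau$. If $\mathbb L$ is separable, then its localization $\mathbb L_{\tau'}$ along $\tau'$ is also separable.
   Context: $N$ is a lattice, $M=N^*$, $\Sigma$ a complete fan in $N_{\mathbb R}$. A tropical Lagrangian multi-section over $\Sigma$ is $\mathbb L=(L,\Sigma',\mu,\pi,\varphi)$: a cone complex $\Sigma'$ with support $L$, a surjective map $\pi:L\to|\Sigma|$ mapping each cone $\sigma'\in\Sigma'$ isomorphically onto a cone of $\Sigma$, multiplicities $\mu:\Sigma'\to\mathbb Z_{>0}$ with constant total multiplicity over each point, and a continuous $\varphi$ on $L$ linear on each maximal cone $\sigma'$ with slope $m(\sigma')\in M$. $\mathbb L$ is separable if for every $\tau\in\Sigma$ and distinct lifts $\tau^{(\alpha)}\ne\tau^{(\beta)}$ of $\tau$ in $\Sigma'$, $\varphi|_{\tau^{(\alpha)}}\ne\varphi|_{\tau^{(\beta)}}$ (as functions on $\tau$ via $\pi$). Localization: for $\tau\in\Sigma$, $N_\tau=N/(\mathbb R\tau\cap N)$, $p_\tau:N\to N_\tau$, $M_\tau=\tau^\perp\cap M$, a splitting $\iota_\tau$ of $p_\tau$ with dual $\iota_\tau^*:M\to M_\tau$, quotient fan $\Sigma_\tau$ with cones $K_\tau(\sigma)=p_\tau(\sigma)$, $\sigma\supset\tau$; for a lift $\tau'$ of $\tau$, $\mathbb L_{\tau'}$ is the tropical Lagrangian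 multi-section over $\Sigma_\tau$ with cones $K_\tau(\sigma)\times\{\iota_\tau^*m(\sigma')\}$ for cones $\sigma'\supset\tau'$ over $\sigma$, glued along common faces over $\Sigma_\tau$, multiplicity $\mu(\sigma')$, and piecewise linear function of slope $\iota_\tau^*m(\sigma')$ on the cone indexed by $\sigma'$. *)

(* Defs.v *)
From HB Require Import structures.
From mathcomp Require Import all_boot all_order all_algebra.
From mathcomp Require Import boolp classical_sets reals.

Set Implicit Arguments.
Unset Strict Implicit.
Unset Printing Implicit Defensive.

Import Order.TTheory GRing.Theory Num.Theory.
Local Open Scope ring_scope.
Local Open Scope classical_set_scope.

(* Conventions:  N = Z^n (row vectors 'rV[int]_n),  N_R = R^n ('rV[R]_n),
   M = Z^n (row vectors 'rV[int]_n) with the pairing <m, x> = sum_i m_i x_i. *)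

Section Cones.
Variables (R : realType) (n : nat).

Definition vR (v : 'rV[int]_n) : 'rV[R]_n := map_mx intr v.

Definition dpair (u : 'rV[int]_n) (x : 'rV[R]_n) : R :=
  \sum_(i < n) (u 0 i)%:~R * x 0 i.

Definition rdpair (u x : 'rV[R]_n) : R := \sum_(i < n) u 0 i * x 0 i.

Definition cone_gen (g : seq 'rV[int]_n) : set 'rV[R]_n :=
  [set x | exists c : 'I_(size g) -> R,
           (forall i, 0 <= c i) /\ x = \sum_(i < size g) c i *: vR g`_i].

Definition rat_poly_cone (s : set 'rV[R]_n) := exists g, s = cone_gen g.

Definition strongly_convex (s : set 'rV[R]_n) :=
  forall x, s x -> s (- x) -> x = 0.

Definition face_of (t s : set 'rV[R]_n) :=
  exists u : 'rV[R]_n, (forall x, s x -> 0 <= rdpair u x) /\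
                       t = [set x | s x /\ rdpair u x = 0].

Definition relint (s : set 'rV[R]_n) : set 'rV[R]_n :=
  [set x | s x /\ forall t, face_of t s -> t x -> t = s].

Definition is_fan (I : finType) (S : I -> set 'rV[R]_n) :=
  [/\ injective S,
      (forall i, rat_poly_cone (S i) /\ strongly_convex (S i)),
      (forall i t, face_of t (S i) -> exists j, S j = t) &
      (forall i j, face_of (S i `&` S j) (S i) /\ face_of (S i `&` S j) (S j))].

Definition complete_fan (I : finType) (S : I -> set 'rV[R]_n) :=
  is_fan S /\ forall x, exists i, S i x.

End Cones.

(* The cone complex Sigma' is given combinatorially: a finite type of cones,
   the map pi sending each cone sigma' to (the index of) the cone pi(sigma')
   of Sigma with which it is identified, and the face relation of Sigma'
   ([tl_face a b] : a is a face of b).  The support L is the union of the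
   cones S (pi a) glued along common faces.  The function varphi is given
   cone-wise: [tl_phi a] is varphi restricted to the cone a, viewed on
   S (pi a) via pi.  [tl_slope a] is the slope m(a) (relevant for maximal a). *)
Record tlms_data (I : finType) (R : realType) (n : nat) := TLMSData {
  tl_cone : finType;
  tl_pi : tl_cone -> I;
  tl_face : rel tl_cone;
  tl_mu : tl_cone -> nat;
  tl_slope : tl_cone -> 'rV[int]_n;
  tl_phi : tl_cone -> 'rV[R]_n -> R }.

Arguments tl_pi {I R n} _ _.
Arguments tl_face {I R n} _ _ _.
Arguments tl_mu {I R n} _ _.
Arguments tl_slope {I R n} _ _.
Arguments tl_phi {I R n} _ _ _.

Section TLMS.
Variables (R : realType) (n : nat) (I : finType) (S : I -> set 'rV[R]_n).
Variable L : tlms_data I R n.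

Definition tl_maximal (a : tl_cone L) : bool :=
  [forall d, tl_face L a d ==> (d == a)].

Definition is_tlms :=
  [/\
      [/\ reflexive (tl_face L), antisymmetric (tl_face L) & transitive (tl_face L)],
      (* ... each cone a is mapped isomorphically onto the cone S (pi a),
         faces going to faces, bijectively on faces *)
      (forall a b, tl_face L a b -> face_of (S (tl_pi L a)) (S (tl_pi L b))),
      (forall b t, face_of t (S (tl_pi L b)) ->
          exists! a, tl_face L a b /\ S (tl_pi L a) = t),
      (* ... and two cones meet along a common face *)
      (forall a b e, tl_face L e a -> tl_face L e b ->
          exists g, [/\ tl_face L g a, tl_face L g b &
                        forall e', tl_face L e' a -> tl_face L e' b -> tl_face L e' g]) &
   [/\ (* pi : L -> |Sigma| is surjective *)
      (forall x, exists a, S (tl_pi L a) x),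
      (forall a, (0 < tl_mu L a)%N),
      (* constant total multiplicity over each point x : the points of L
         over x correspond to the cones a with x in relint (S (pi a)) *)
      (exists r : nat, forall x,
          (\sum_(a : tl_cone L | `[< relint (S (tl_pi L a)) x >]) tl_mu L a)%N = r),
      (* varphi is a well-defined continuous function on L *)
      (forall e a x, tl_face L e a -> S (tl_pi L e) x ->
          tl_phi L e x = tl_phi L a x) &
      (forall a x, tl_maximal a -> S (tl_pi L a) x ->
          tl_phi L a x = dpair (tl_slope L a) x)]].

Definition separable :=
  forall a b : tl_cone L, tl_pi L a = tl_pi L b -> a != b ->
    exists x, S (tl_pi L a) x /\ tl_phi L a x != tl_phi L b x.

End TLMS.

Section Localization.
Variables (R : realType) (n : nat) (I : finType) (S : I -> set 'rV[R]_n).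
Variable (t : I).

(* A presentation of N_tau = N / (R tau ∩ N) as Z^k: the projection
   p_tau : N -> N_tau is x |-> x *m p, with kernel exactly the lattice points
   of the linear span R tau = tau - tau; iota is a splitting (p o iota = id),
   x |-> x *m iota.  Its dual iota^* : M -> M_tau is m |-> m *m iota^T. *)
Definition quotient_presentation (k : nat) (p : 'M[int]_(n, k))
    (iota : 'M[int]_(k, n)) :=
  (forall x : 'rV[int]_n,
      x *m p = 0 <-> exists a b, [/\ S t a, S t b & vR R x = a - b]) /\
  iota *m p = 1%:M.

(* cones of Sigma containing tau: index set of the quotient fan Sigma_tau *)
Definition star_idx := {j : I | `[< face_of (S t) (S j) >]}.

Definition quot_fan (k : nat) (p : 'M[int]_(n, k)) : star_idx -> set 'rV[R]_k :=
  fun j => (fun x : 'rV[R]_n => x *m map_mx intr p) @` S (val j).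

Variables (L : tlms_data I R n) (k : nat) (p : 'M[int]_(n, k))
          (iota : 'M[int]_(k, n)) (tau' : tl_cone L).

(* cones sigma' of Sigma' containing tau' (the second conjunct is implied
   by the cone-complex axioms; it is included so that pi lands in Sigma_tau) *)
Definition loc_cone_pred (a : tl_cone L) : bool :=
  tl_face L tau' a && `[< face_of (S t) (S (tl_pi L a)) >].

Definition loc_cone := {a : tl_cone L | loc_cone_pred a}.

Lemma loc_cone_star (a : loc_cone) : `[< face_of (S t) (S (tl_pi L (val a))) >].
Proof. by case/andP: (valP a). Qed.

Definition loc_pi (a : loc_cone) : star_idx :=
  exist _ (tl_pi L (val a)) (loc_cone_star a).

Definition loc_face : rel loc_cone := fun a b => tl_face L (val a) (val b).

Definition loc_mu (a : loc_cone) : nat := tl_mu L (val a).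

Definition loc_slope (a : loc_cone) : 'rV[int]_k := tl_slope L (val a) *m iota^T.

Definition loc_maximal (a : loc_cone) : bool :=
  [forall d, loc_face a d ==> (d == a)].

(* the piecewise linear function of L_tau': on the cone indexed by a it is
   the linear function of slope iota^* m(e) for a maximal cone e containing a
   (any choice gives the same function on the cone, by continuity) *)
Definition loc_phi (a : loc_cone) (y : 'rV[R]_k) : R :=
  if [pick e | loc_face a e && loc_maximal e] is Some e
  then dpair (loc_slope e) y else 0.

Definition localization : tlms_data star_idx R k :=
  @TLMSData star_idx R k loc_cone loc_pi loc_face loc_mu loc_slope loc_phi.

End Localization.

(* Main.v *)
Require Import Defs.
From HB Require Import structures.
From mathcomp Require Import all_boot all_order all_algebra.
From mathcomp Require Import boolp classical_sets reals.
From mathcomp Require Import lra.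
Import GRing.Theory Num.Theory.
Local Open Scope ring_scope.

Section H.
Variables (R : realType) (n k : nat).
Implicit Types (m : 'rV[int]_n) (x y : 'rV[R]_n).

Lemma dpairE q (m : 'rV[int]_q) (x : 'rV[R]_q) : dpair m x = (vR R m *m x^T) 0 0.
Proof. by rewrite /dpair mxE; apply: eq_bigr => i _; rewrite !mxE. Qed.

Lemma dpairB m x y : dpair m (x - y) = dpair m x - dpair m y.
Proof. rewrite /dpair -sumrB; apply: eq_bigr => i _; by rewrite !mxE mulrBr. Qed.

Lemma dpair_loc (m : 'rV[int]_n) (io : 'M[int]_(k, n)) (P : 'M[int]_(n,k)) x :
  dpair (m *m io^T) (x *m map_mx intr P) =
  dpair m (x *m map_mx intr P *m map_mx intr io).
Proof.
rewrite !dpairE /vR !map_mxM !trmx_mul !mulmxA.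
by rewrite -map_trmx.
Qed.

Lemma dpair_W (Q : 'M[R]_n) (z : 'I_n -> 'rV[int]_n) m1 m2 :
  (forall j, vR R (z j) = row j Q) ->
  (forall j, dpair m1 (vR R (z j)) = dpair m2 (vR R (z j))) ->
  forall x, dpair m1 (x *m Q) = dpair m2 (x *m Q).
Proof.
move=> Hz H x.
have E : vR R m1 *m Q^T = vR R m2 *m Q^T.
  apply/rowP => j; have := H j; rewrite !dpairE Hz !mxE => Hj.
  move: Hj; rewrite (eq_bigr (fun i => vR R m1 0 i * Q^T i j)); last by move=> i _; rewrite !mxE.
  by rewrite [X in _ = X -> _](eq_bigr (fun i => vR R m2 0 i * Q^T i j)) // => i _; rewrite !mxE.
by rewrite !dpairE trmx_mul !mulmxA E.
Qed.
End H.

Lemma face_sub (R : realType) n (t s : set 'rV[R]_n) : face_of t s -> forall x, t x -> s x.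
Proof. by case=> u [_ ->] x []. Qed.

Theorem propositionB3 (R : realType) (n : nat) (I : finType)
    (S : I -> classical_sets.set 'rV[R]_n) (L : tlms_data I R n)
    (t : I) (k : nat) (p : 'M[int]_(n, k)) (iota : 'M[int]_(k, n))
    (tau' : tl_cone L) :
  complete_fan S ->
  is_tlms S L ->
  quotient_presentation S t p iota ->
  tl_pi L tau' = t ->
  separable S L ->
  separable (@quot_fan R n I S t k p) (@localization R n I S t L k iota tau').
Proof.
move=> _ [[Hrefl Hanti Htrans] Hface _ _ [_ _ _ Hcont Hlin]] [Hker Hsplit] Hpi Hsep.
set P := map_mx (intr : int -> R) p; set Io := map_mx (intr : int -> R) iota.
have Hmax : forall c : loc_cone S t tau', exists e, loc_face c e && loc_maximal e.
  move=> c.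
  have Hcc : loc_face c c by exact: Hrefl.
  case: (arg_maxnP (fun e => #|[set d | loc_face d e]|) Hcc) => e Hce Hm.
  exists e; rewrite Hce /=; apply/forallP => d; apply/implyP => Hed.
  apply/eqP/val_inj/Hanti; apply/andP; split; last exact: Hed.
  apply/negPn/negP => Hnde.
  have Hlt : (#|[set d0 | loc_face d0 e]| < #|[set d0 | loc_face d0 d]|)%N.
    apply: proper_card; apply/fintype.properP; split.
      by apply/fintype.subsetP => d0; rewrite !inE => H; exact: Htrans H Hed.
    by exists d; rewrite !inE ?Hnde //; exact: Hrefl.
  have := Hm d (Htrans _ _ _ Hce Hed).
  by move=> /= H; move: Hlt; rewrite ltnNge H.
have Hmaxtl : forall e : loc_cone S t tau', loc_maximal e -> tl_maximal (val e).
  move=> e He; apply/forallP => d; apply/implyP => Hed.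
  have Hd : loc_cone_pred S t tau' d.
    rewrite /loc_cone_pred (Htrans _ _ _ (andP (valP e)).1 Hed) /=.
    by apply/asboolP; rewrite -Hpi; apply: Hface; exact: Htrans (andP (valP e)).1 Hed.
  move/forallP: He => /(_ (exist _ d Hd)) /implyP /(_ Hed) /eqP <-.
  by [].
have key : forall (c : loc_cone S t tau') x, S (tl_pi L (val c)) x ->
    exists m, [/\ loc_phi iota c (x *m P) = dpair m (x *m P *m Io),
      tl_phi L (val c) x = dpair m x &
      forall z, S t z -> dpair m z = tl_phi L tau' z].
  move=> c x Hx; rewrite /loc_phi.
  case: pickP => [e /andP[Hce Hme] | Hn]; last first.
    by have [e He] := Hmax c; rewrite Hn in He.
  exists (tl_slope L (val e)); split.
  - by rewrite /loc_slope dpair_loc.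
  - rewrite (Hcont _ _ _ Hce Hx); apply: Hlin (Hmaxtl e Hme) _.
    exact: face_sub (Hface _ _ Hce) _ Hx.
  - move=> z Hz; have Hz' : S (tl_pi L tau') z by rewrite Hpi.
    rewrite (Hcont _ _ _ (andP (valP e)).1 Hz') Hlin //; first exact: Hmaxtl e Hme.
    exact: face_sub (Hface _ _ (andP (valP e)).1) _ Hz'.
move=> a b Hab Hne.
have Hab' : tl_pi L (val a) = tl_pi L (val b) by move: Hab => /(congr1 val).
have Hne' : val a != val b by [].
have [x [Hx Hphi]] := Hsep _ _ Hab' Hne'.
exists (x *m P); split; first by exists x.
have [ma [Ea1 Ea2 Ea3]] := key a x Hx.
have Hxb : S (tl_pi L (val b)) x by rewrite -Hab'.
have [mb [Eb1 Eb2 Eb3]] := key b x Hxb.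
rewrite /= Ea1 Eb1.
have W : dpair ma (x *m (1%:M - P *m Io)) = dpair mb (x *m (1%:M - P *m Io)).
  apply: (@dpair_W R n (1%:M - P *m Io) (fun j => delta_mx 0 j - delta_mx 0 j *m p *m iota) ma mb).
  - move=> j; rewrite /vR map_mxB !map_mxM map_delta_mx rowE mulmxBr mulmx1 !mulmxA.
    by [].
  - move=> j.
    have Hz0 : ((delta_mx 0 j : 'rV[int]_n) - delta_mx 0 j *m p *m iota) *m p = 0.
      by rewrite mulmxBl -!mulmxA Hsplit mulmx1 subrr.
    have [u [v [Hu Hv Euv]]] := (Hker _).1 Hz0.
    by rewrite Euv !dpairB (Ea3 u) // (Ea3 v) // (Eb3 u) // (Eb3 v).
move: W; rewrite mulmxBr mulmx1 !dpairB mulmxA => W.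
rewrite Ea2 Eb2 in Hphi.
apply: contra Hphi => /eqP E; apply/eqP.
rewrite E in W; lra.
Qed.
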